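(* Let $X,Y\subset\mathbb{R}^d$ be bounded open sets with $X$ connected, and let $c:X\times Y\to\mathbb{R}$ be bounded from below and admit a modulus of continuity. Let $a\in\mathbb{R}$ and let $\psi$ be a subharmonic function on $X$ with values in $[a,\infty)$. Then $$Q_{\bar c}(\psi)=Q_{\bar c}\big(Q_{ce}(Q_{\bar c}(\psi))\big)\quad\text{and}\quad Q_{ce}(\psi)=Q_{ce}\big(Q_{\bar c}(Q_{ce}(\psi))\big).$$
   Context: For $g$ on $Y$: $Q_c(g)(x)=\inf_{y\in Y}\{g(y)+c(x,y)\}$ for $x\in X$; for $g$ on $X$: $Q_{\bar c}(g)(y)=\sup_{x\in X}\{g(x)-c(x,y)\}$ for $y\in Y$ (extended-real valued). For a function $g$ on $X$, its subharmonic envelope is $g_e=\sup\{\phi:\phi\text{ subharmonic on }X,\ \phi\le g\}$, and $Q_{ce}(g):=(Q_c(g))_e$. A function is subharmonic on $X$ if it is upper semicontinuous with values in $[-\infty,\infty)$ and satisfies the sub-mean-value inequality on every sphere whose ball lies in $X$. *)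

(* Defs.v *)
From HB Require Import structures.
From mathcomp Require Import all_boot all_order all_algebra.
From mathcomp Require Import all_classical all_reals all_analysis.
Set Implicit Arguments. Unset Strict Implicit. Unset Printing Implicit Defensive.
Import Order.TTheory GRing.Theory Num.Theory.
Import numFieldNormedType.Exports.
Local Open Scope classical_set_scope.
Local Open Scope ring_scope.

(* Euclidean space R^d is modelled by row vectors 'rV[R]_d (product topology,
   which is the Euclidean topology). *)

Definition enorm (R : realType) (d : nat) (v : 'rV[R]_d) : R :=
  Num.sqrt (\sum_(i < d) v ord0 i ^+ 2).

(* Iterated Lebesgue integral on R^d:  int ... int f(t_1,...,t_d) dt_1 ... dt_d
   (used only for nonnegative integrands, where it is the Lebesgue integral
   on R^d by Tonelli). *)
Fixpoint iint (R : realType) (d : nat) : ('rV[R]_d -> \bar R) -> \bar R :=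
  match d return ('rV[R]_d -> \bar R) -> \bar R with
  | 0 => fun f => f 0
  | d'.+1 => fun f =>
      (\int[@lebesgue_measure R]_(t in [set: R])
         iint (fun v : 'rV[R]_d' => f (row_mx (\row_(_ < 1) t) v)))%E
  end.

(* Normalized surface measure on the unit sphere is the push-forward
   of the normalized Lebesgue measure on the closed unit ball under the radial
   projection z |-> z/|z| (cone-measure definition), hence
   mean_{S(x,r)} f = (1/|B_1|) int_{B_1} f(x + r z/|z|) dz,
   where the integral is split into positive and negative parts. *)
Definition sphere_mean (R : realType) (d : nat) (f : 'rV[R]_d -> \bar R)
    (x : 'rV[R]_d) (r : R) : \bar R :=
  let g z := f (x + (r / enorm z) *: z) in
  let B z := enorm z <= 1 in
  let vol := iint (fun z => if B z then 1%E else 0%E) in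
  ((iint (fun z => if B z then maxe (g z) 0 else 0)
    - iint (fun z => if B z then maxe (- g z) 0 else 0))
   * ((fine vol)^-1)%:E)%E.

Definition usc_on (R : realType) (d : nat) (X : set 'rV[R]_d)
    (f : 'rV[R]_d -> \bar R) :=
  forall x, X x -> forall a : R, (f x < a%:E)%E ->
    exists2 V, nbhs x V & forall y, V y -> (f y < a%:E)%E.

Definition subharmonic (R : realType) (d : nat) (X : set 'rV[R]_d)
    (phi : 'rV[R]_d -> \bar R) : Prop :=
  [/\ forall x, X x -> (phi x < +oo)%E,
      usc_on X phi &
      forall x r, X x -> 0 < r ->
        [set y | enorm (y - x) <= r] `<=` X ->
        (phi x <= sphere_mean phi x r)%E].

Definition senv (R : realType) (d : nat) (X : set 'rV[R]_d)
    (g : 'rV[R]_d -> \bar R) : 'rV[R]_d -> \bar R :=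
  fun x => ereal_sup [set e | exists phi, [/\ subharmonic X phi,
                      (forall y, X y -> (phi y <= g y)%E) & e = phi x]].

Definition Qc (R : realType) (d : nat) (Y : set 'rV[R]_d)
    (c : 'rV[R]_d -> 'rV[R]_d -> R) (g : 'rV[R]_d -> \bar R) :
    'rV[R]_d -> \bar R :=
  fun x => ereal_inf [set (g y + (c x y)%:E)%E | y in Y].

Definition Qcbar (R : realType) (d : nat) (X : set 'rV[R]_d)
    (c : 'rV[R]_d -> 'rV[R]_d -> R) (g : 'rV[R]_d -> \bar R) :
    'rV[R]_d -> \bar R :=
  fun y => ereal_sup [set (g x - (c x y)%:E)%E | x in X].

Definition Qce (R : realType) (d : nat) (X Y : set 'rV[R]_d)
    (c : 'rV[R]_d -> 'rV[R]_d -> R) (g : 'rV[R]_d -> \bar R) :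
    'rV[R]_d -> \bar R :=
  senv X (Qc Y c g).

Definition has_modulus (R : realType) (d : nat) (X Y : set 'rV[R]_d)
    (c : 'rV[R]_d -> 'rV[R]_d -> R) : Prop :=
  exists omega : R -> R, omega t @[t --> 0^'+] --> 0 /\
    forall x x' y y', X x -> X x' -> Y y -> Y y' ->
      `|c x y - c x' y'| <= omega (enorm (x - x') + enorm (y - y')).

(* Main.v *)
Require Import Defs.
From HB Require Import structures.
From mathcomp Require Import all_boot all_order all_algebra.
From mathcomp Require Import all_classical all_reals all_analysis.
Import Order.TTheory GRing.Theory Num.Theory.
Import numFieldNormedType.Exports.
Local Open Scope classical_set_scope.
Local Open Scope ring_scope.

Section Aux.
Variables (R : realType) (d : nat) (X Y : set 'rV[R]_d)
  (c : 'rV[R]_d -> 'rV[R]_d -> R).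
Local Open Scope ereal_scope.

Lemma Tmono f g y : (forall x, X x -> f x <= g x) ->
  Qcbar X c f y <= Qcbar X c g y.
Proof.
move=> fg; apply: ge_ereal_sup => _ [x Xx <-].
apply: (@le_trans _ _ (g x - (c x y)%:E)); first by rewrite leeD2r // fg.
by apply: ereal_sup_ubound; exists x.
Qed.

Lemma Smono f g x : (forall y, Y y -> f y <= g y) ->
  Qc Y c f x <= Qc Y c g x.
Proof.
move=> fg; apply: le_ereal_inf_tmp => _ [y Yy <-].
apply: (@le_trans _ _ (f y + (c x y)%:E)); last by rewrite leeD2r // fg.
by apply: ereal_inf_lbound; exists y.
Qed.

Lemma E_le g x : X x -> senv X g x <= g x.
Proof. by move=> Xx; apply: ge_ereal_sup => _ [phi [_ h ->]]; apply: h. Qed.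

Lemma E_ge g phi x : subharmonic X phi -> (forall y, X y -> phi y <= g y) ->
  phi x <= senv X g x.
Proof. by move=> sp h; apply: ereal_sup_ubound; exists phi. Qed.

Lemma Emono f g x : (forall y, X y -> f y <= g y) ->
  senv X f x <= senv X g x.
Proof.
move=> fg; apply: ge_ereal_sup => _ [phi [sp h ->]].
apply: E_ge => // y Xy; exact: le_trans (h y Xy) (fg y Xy).
Qed.

Lemma le_ST f x : X x -> f x <= Qc Y c (Qcbar X c f) x.
Proof.
move=> Xx; apply: le_ereal_inf_tmp => _ [y Yy <-].
rewrite -leeBlDr //.
by apply: ereal_sup_ubound; exists x.
Qed.

Lemma TS_le f y : Y y -> Qcbar X c (Qc Y c f) y <= f y.
Proof.
move=> Yy; apply: ge_ereal_sup => _ [x Xx <-].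
rewrite leeBlDr //.
by apply: ereal_inf_lbound; exists y.
Qed.
End Aux.

Theorem mainTheorem17 (R : realType) (d : nat) (X Y : set 'rV[R]_d)
    (c : 'rV[R]_d -> 'rV[R]_d -> R) (a : R) (psi : 'rV[R]_d -> \bar R) :
  open X -> open Y -> bounded_set X -> bounded_set Y -> connected X ->
  (exists m : R, forall x y, X x -> Y y -> m <= c x y) ->
  has_modulus X Y c ->
  subharmonic X psi -> (forall x, X x -> (a%:E <= psi x)%E) ->
  (forall y, Y y ->
     Qcbar X c psi y = Qcbar X c (Qce X Y c (Qcbar X c psi)) y) /\
  (forall x, X x ->
     Qce X Y c psi x = Qce X Y c (Qcbar X c (Qce X Y c psi)) x).
Proof.
move=> _ _ _ _ _ _ _ spsi _; rewrite /Qce; split.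
- move=> y Yy; apply/eqP; rewrite eq_le; apply/andP; split.
    apply: Tmono => x Xx; apply: E_ge => // z Xz; exact: le_ST.
  apply: (@le_trans _ _ (Qcbar X c (Qc Y c (Qcbar X c psi)) y)); last exact: (@TS_le _ _ X Y c (Qcbar X c psi) y Yy).
  apply: Tmono => x Xx; exact: E_le.
- move=> x Xx; set u := senv X (Qc Y c psi).
  apply/eqP; rewrite eq_le; apply/andP; split.
    apply: ge_ereal_sup => _ [phi [sp h ->]].
    apply: E_ge => // z Xz.
    apply: (@le_trans _ _ (u z)); last exact: (@le_ST _ _ X Y c u z Xz).
    exact: E_ge.
  apply: Emono => z Xz; apply: Smono => y Yy.
  apply: (@le_trans _ _ (Qcbar X c (Qc Y c psi) y)); last exact: (@TS_le _ _ X Y c psi y Yy).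
  apply: Tmono => w Xw; exact: E_le.
Qed.
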